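(* Let $\varphi\colon G\to G$ and $\psi\colon H\to H$ be endomorphisms of abelian groups and let $\varphi\oplus\psi\colon G\oplus H\to G\oplus H$ be given by $(\varphi\oplus\psi)(g,h)=(\varphi g,\psi h)$. Then $\varphi\oplus\psi$ is positively expansive if and only if both $\varphi$ and $\psi$ are positively expansive. Analogously, if $\varphi$ and $\psi$ are automorphisms, then $\varphi\oplus\psi$ is expansive if and only if both $\varphi$ and $\psi$ are expansive.
   Context: $\mathbb N=\{0,1,2,\dots\}$. An endomorphism $\varphi$ of an abelian group $G$ is positively expansive if there is a finite subgroup $S\leq G$ such that for every finite subgroup $F\leq G$ there is $n\in\mathbb N$ with $F\subseteq\sum_{k=0}^n\varphi^kS$. An automorphism $\varphi$ is expansive if there is a finite subgroup $S\leq G$ such that for every finite subgroup $F\leq G$ there is $n\in\mathbb N$ with $F\subseteq\sum_{|k|\leq n}\varphi^kS$. *)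

(* Defs.v *)
From mathcomp Require Import all_boot all_order all_algebra.
Set Implicit Arguments. Unset Strict Implicit. Unset Printing Implicit Defensive.
Import GRing.Theory.
Local Open Scope ring_scope.

Definition is_subgroup (G : zmodType) (S : G -> Prop) : Prop :=
  S 0 /\ (forall x y, S x -> S y -> S (x - y)).

Definition finite_pred (G : zmodType) (S : G -> Prop) : Prop :=
  exists s : seq G, forall x, S x -> x \in s.

Definition finite_subgroup (G : zmodType) (S : G -> Prop) : Prop :=
  is_subgroup S /\ finite_pred S.

Definition in_pos_sum (G : zmodType) (phi : G -> G) (S : G -> Prop)
    (n : nat) (x : G) : Prop :=
  exists f : nat -> G, (forall k, (k <= n)%N -> S (f k)) /\
    x = \sum_(k < n.+1) iter k phi (f k).

(* x lies in  sum_{|k| <= n} phi^k S, for phi an automorphism;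
   phi^{-k} S is the image of S under phi^{-k}, i.e. the preimage of S
   under phi^k. *)
Definition in_sym_sum (G : zmodType) (phi : G -> G) (S : G -> Prop)
    (n : nat) (x : G) : Prop :=
  exists f g : nat -> G,
    (forall k, (k <= n)%N -> S (f k)) /\
    (forall k, (1 <= k <= n)%N -> S (iter k phi (g k))) /\
    x = \sum_(k < n.+1) iter k phi (f k) + \sum_(1 <= k < n.+1) g k.

Definition pos_expansive (G : zmodType) (phi : G -> G) : Prop :=
  exists S : G -> Prop, finite_subgroup S /\
    forall F : G -> Prop, finite_subgroup F ->
      exists n : nat, forall x, F x -> in_pos_sum phi S n x.

Definition expansive (G : zmodType) (phi : G -> G) : Prop :=
  exists S : G -> Prop, finite_subgroup S /\
    forall F : G -> Prop, finite_subgroup F ->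
      exists n : nat, forall x, F x -> in_sym_sum phi S n x.

Definition dsum_map (G H : zmodType) (phi : G -> G) (psi : H -> H)
    : G * H -> G * H := fun p => (phi p.1, psi p.2).

(* Main.v *)
Require Import Defs.
From mathcomp Require Import all_boot all_order all_algebra.
Set Implicit Arguments. Unset Strict Implicit. Unset Printing Implicit Defensive.
Local Open Scope ring_scope.
Import GRing.Theory.

Section Aux.
Variables (G H : zmodType).

Lemma iter_dsum (phi : G -> G) (psi : H -> H) k p :
  iter k (dsum_map phi psi) p = (iter k phi p.1, iter k psi p.2).
Proof. elim: k => [|k IH] /=; [by case: p | by rewrite IH]. Qed.

Lemma sum_fst I (r : seq I) (P : pred I) (F : I -> G * H) :
  (\sum_(i <- r | P i) F i).1 = \sum_(i <- r | P i) (F i).1.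
Proof. by apply: (big_morph fst) => // -[a b] [c d]. Qed.

Lemma sum_snd I (r : seq I) (P : pred I) (F : I -> G * H) :
  (\sum_(i <- r | P i) F i).2 = \sum_(i <- r | P i) (F i).2.
Proof. by apply: (big_morph snd) => // -[a b] [c d]. Qed.

Lemma sum_pair I (r : seq I) (P : pred I) (F1 : I -> G) (F2 : I -> H) :
  (\sum_(i <- r | P i) F1 i, \sum_(i <- r | P i) F2 i) =
  \sum_(i <- r | P i) (F1 i, F2 i).
Proof. by rewrite [RHS]surjective_pairing sum_fst sum_snd. Qed.

Lemma iter0 (K : zmodType) (phi : {additive K -> K}) k : iter k phi 0 = 0.
Proof. by elim: k => //= k ->; rewrite raddf0. Qed.

Lemma pos_mono (K : zmodType) (phi : {additive K -> K}) S n m x :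
  S 0 -> (n <= m)%N -> in_pos_sum phi S n x -> in_pos_sum phi S m x.
Proof.
move=> S0 nm [f [Sf ->]].
exists (fun k => if (k <= n)%N then f k else 0); split.
  by move=> k _; case: ifP => // /Sf.
rewrite (big_ord_widen m.+1 (fun k => iter k phi (f k)) (nm : (n.+1 <= m.+1)%N)).
rewrite big_mkcond /=; apply: eq_bigr => i _.
by rewrite ltnS; case: ifP => // _; rewrite iter0.
Qed.

Lemma sym_mono (K : zmodType) (phi : {additive K -> K}) S n m x :
  S 0 -> (n <= m)%N -> in_sym_sum phi S n x -> in_sym_sum phi S m x.
Proof.
move=> S0 nm [f [g [Sf [Sg ->]]]].
exists (fun k => if (k <= n)%N then f k else 0),
       (fun k => if (k <= n)%N then g k else 0); split; last split.
- by move=> k _; case: ifP => // /Sf.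
- move=> k /andP[k1 km]; case: ifP => [kn|_]; last by rewrite iter0.
  by apply: Sg; rewrite k1 kn.
- congr (_ + _).
    rewrite (big_ord_widen m.+1 (fun k => iter k phi (f k)) (nm : (n.+1 <= m.+1)%N)).
    rewrite big_mkcond /=; apply: eq_bigr => i _.
    by rewrite ltnS; case: ifP => // _; rewrite iter0.
  rewrite (@big_cat_nat _ _ _ n.+1 1 m.+1) //=.
  rewrite [X in _ = _ + X]big_nat_cond [X in _ = _ + X]big1 ?addr0.
    by apply: eq_big_nat => i /andP[_ ]; rewrite ltnS => ->.
  by move=> i /andP[/andP[ni _] _]; rewrite leqNgt ni.
Qed.

Variables (phi : {additive G -> G}) (psi : {additive H -> H}).

Definition pr1 (S : G * H -> Prop) : G -> Prop := fun a => exists b, S (a, b).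
Definition pr2 (S : G * H -> Prop) : H -> Prop := fun b => exists a, S (a, b).
Definition emb1 (F : G -> Prop) : G * H -> Prop := fun p => F p.1 /\ p.2 = 0.
Definition emb2 (F : H -> Prop) : G * H -> Prop := fun p => F p.2 /\ p.1 = 0.
Definition prd (S1 : G -> Prop) (S2 : H -> Prop) : G * H -> Prop :=
  fun p => S1 p.1 /\ S2 p.2.

Lemma fs_pr1 S : finite_subgroup S -> finite_subgroup (pr1 S).
Proof.
move=> [[S0 Ss] [s Hs]]; split; first split.
- by exists 0.
- by move=> x y [b1 h1] [b2 h2]; exists (b1 - b2); exact: (Ss _ _ h1 h2).
exists (map fst s) => x [b h]; apply/mapP; exists (x, b) => //; exact: Hs.
Qed.

Lemma fs_pr2 S : finite_subgroup S -> finite_subgroup (pr2 S).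
Proof.
move=> [[S0 Ss] [s Hs]]; split; first split.
- by exists 0.
- by move=> x y [b1 h1] [b2 h2]; exists (b1 - b2); exact: (Ss _ _ h1 h2).
exists (map snd s) => x [b h]; apply/mapP; exists (b, x) => //; exact: Hs.
Qed.

Lemma fs_emb1 F : finite_subgroup F -> finite_subgroup (emb1 F).
Proof.
move=> [[F0 Fs] [s Hs]]; split; first split.
- by split.
- move=> [x1 x2] [y1 y2] [/= h1 ->] [/= h2 ->]; split; last by rewrite /= subr0.
  exact: Fs.
exists (map (fun a => (a, 0)) s) => -[x1 x2] [/= h ->]; apply/mapP.
by exists x1 => //; exact: Hs.
Qed.

Lemma fs_emb2 F : finite_subgroup F -> finite_subgroup (emb2 F).
Proof.
move=> [[F0 Fs] [s Hs]]; split; first split.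
- by split.
- move=> [x1 x2] [y1 y2] [/= h1 ->] [/= h2 ->]; split; last by rewrite /= subr0.
  exact: Fs.
exists (map (fun a => (0, a)) s) => -[x1 x2] [/= h ->]; apply/mapP.
by exists x2 => //; exact: Hs.
Qed.

Lemma fs_prd S1 S2 : finite_subgroup S1 -> finite_subgroup S2 ->
  finite_subgroup (prd S1 S2).
Proof.
move=> [[A0 As] [s Hs]] [[B0 Bs] [t Ht]]; split; first split.
- by split.
- by move=> [x1 x2] [y1 y2] [/= h1 h2] [/= h3 h4]; split; [exact: As | exact: Bs].
exists [seq (a, b) | a <- s, b <- t] => -[x1 x2] [/= h1 h2].
by apply: allpairs_f; [exact: Hs | exact: Ht].
Qed.

Lemma pos_pr1 S n p : in_pos_sum (dsum_map phi psi) S n p -> in_pos_sum phi (pr1 S) n p.1.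
Proof.
move=> [f [Sf ->]]; exists (fun k => (f k).1); split.
  by move=> k /Sf Sk; exists (f k).2; case: (f k) Sk.
by rewrite sum_fst; apply: eq_bigr => i _; rewrite iter_dsum.
Qed.

Lemma pos_pr2 S n p : in_pos_sum (dsum_map phi psi) S n p -> in_pos_sum psi (pr2 S) n p.2.
Proof.
move=> [f [Sf ->]]; exists (fun k => (f k).2); split.
  by move=> k /Sf Sk; exists (f k).1; case: (f k) Sk.
by rewrite sum_snd; apply: eq_bigr => i _; rewrite iter_dsum.
Qed.

Lemma sym_pr1 S n p : in_sym_sum (dsum_map phi psi) S n p -> in_sym_sum phi (pr1 S) n p.1.
Proof.
move=> [f [g [Sf [Sg ->]]]]; exists (fun k => (f k).1), (fun k => (g k).1).
split; last split.
- by move=> k /Sf Sk; exists (f k).2; case: (f k) Sk.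
- by move=> k /Sg; rewrite iter_dsum => h; exists (iter k psi (g k).2).
by rewrite /= sum_fst sum_fst; congr (_ + _); apply: eq_bigr => i _; rewrite iter_dsum.
Qed.

Lemma sym_pr2 S n p : in_sym_sum (dsum_map phi psi) S n p -> in_sym_sum psi (pr2 S) n p.2.
Proof.
move=> [f [g [Sf [Sg ->]]]]; exists (fun k => (f k).2), (fun k => (g k).2).
split; last split.
- by move=> k /Sf Sk; exists (f k).1; case: (f k) Sk.
- by move=> k /Sg; rewrite iter_dsum => h; exists (iter k phi (g k).1).
by rewrite /= sum_snd sum_snd; congr (_ + _); apply: eq_bigr => i _; rewrite iter_dsum.
Qed.

Lemma pos_comb S1 S2 n a b : in_pos_sum phi S1 n a -> in_pos_sum psi S2 n b ->
  in_pos_sum (dsum_map phi psi) (prd S1 S2) n (a, b).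
Proof.
move=> [f1 [S1f ->]] [f2 [S2f ->]]; exists (fun k => (f1 k, f2 k)); split.
  by move=> k kn; split; [exact: S1f | exact: S2f].
by rewrite sum_pair; apply: eq_bigr => i _; rewrite iter_dsum.
Qed.

Lemma sym_comb S1 S2 n a b : in_sym_sum phi S1 n a -> in_sym_sum psi S2 n b ->
  in_sym_sum (dsum_map phi psi) (prd S1 S2) n (a, b).
Proof.
move=> [f1 [g1 [S1f [S1g ->]]]] [f2 [g2 [S2f [S2g ->]]]].
exists (fun k => (f1 k, f2 k)), (fun k => (g1 k, g2 k)); split; last split.
- by move=> k kn; split; [exact: S1f | exact: S2f].
- by move=> k kn; rewrite iter_dsum; split; [exact: S1g | exact: S2g].
rewrite -!sum_pair /=; congr (_ + _, _ + _); [rewrite sum_fst|rewrite sum_snd]; apply: eq_bigr => i _; by rewrite iter_dsum.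
Qed.

End Aux.

Theorem proposition2p7 (G H : zmodType)
  (phi : {additive G -> G}) (psi : {additive H -> H}) :
  (pos_expansive (dsum_map phi psi) <-> pos_expansive phi /\ pos_expansive psi) /\
  (bijective phi -> bijective psi ->
   (expansive (dsum_map phi psi) <-> expansive phi /\ expansive psi)).
Proof.
split; last move=> _ _; split.
- move=> [S [fS HS]]; split.
    exists (pr1 S); split; first exact: fs_pr1.
    move=> F /(fs_emb1 H) /HS [n Hn]; exists n => x Fx.
    exact: (pos_pr1 (Hn (x, 0) (conj Fx erefl))).
  exists (pr2 S); split; first exact: fs_pr2.
  move=> F /(fs_emb2 G) /HS [n Hn]; exists n => x Fx.
  exact: (pos_pr2 (Hn (0, x) (conj Fx erefl))).
- move=> [[S1 [fS1 H1]] [S2 [fS2 H2]]]; exists (prd S1 S2); split.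
    exact: fs_prd.
  move=> F fF; have [n1 Hn1] := H1 _ (fs_pr1 fF); have [n2 Hn2] := H2 _ (fs_pr2 fF).
  exists (maxn n1 n2) => -[a b] Fab; apply: pos_comb.
    by apply: (pos_mono fS1.1.1 (leq_maxl n1 n2)); apply: Hn1; exists b.
  by apply: (pos_mono fS2.1.1 (leq_maxr n1 n2)); apply: Hn2; exists a.
- move=> [S [fS HS]]; split.
    exists (pr1 S); split; first exact: fs_pr1.
    move=> F /(fs_emb1 H) /HS [n Hn]; exists n => x Fx.
    exact: (sym_pr1 (Hn (x, 0) (conj Fx erefl))).
  exists (pr2 S); split; first exact: fs_pr2.
  move=> F /(fs_emb2 G) /HS [n Hn]; exists n => x Fx.
  exact: (sym_pr2 (Hn (0, x) (conj Fx erefl))).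
- move=> [[S1 [fS1 H1]] [S2 [fS2 H2]]]; exists (prd S1 S2); split.
    exact: fs_prd.
  move=> F fF; have [n1 Hn1] := H1 _ (fs_pr1 fF); have [n2 Hn2] := H2 _ (fs_pr2 fF).
  exists (maxn n1 n2) => -[a b] Fab; apply: sym_comb.
    by apply: (sym_mono fS1.1.1 (leq_maxl n1 n2)); apply: Hn1; exists b.
  by apply: (sym_mono fS2.1.1 (leq_maxr n1 n2)); apply: Hn2; exists a.
Qed.
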